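(* Let $\mathcal{E}\in(0,1)$. If $v\in L^\infty(\mathbb{R})\cap H^2_{\rm loc}(\mathbb{R})$ satisfies $L_-v=0$, then $v=Cu_0$ for some constant $C$. Moreover, there exists a unique even $2T_0$-periodic function $V\in H^2_{\rm per}(0,2T_0)$ such that $L_-V=u_0'$.
   Context: For $\mathcal{E}\in(0,1)$, $u_0(x)=\sqrt{1-\mathcal{E}}\,\mathrm{sn}\big(x\sqrt{(1+\mathcal{E})/2},\,k\big)$ with $k=\sqrt{(1-\mathcal{E})/(1+\mathcal{E})}$ (Jacobi elliptic function of modulus $k$); it satisfies $u_0''+(1-u_0^2)u_0=0$ and has minimal period $2T_0$. $L_-v=-v''+(u_0^2-1)v$. *)

(* Defs.v *)
From Stdlib Require Import Reals Lra ClassicalEpsilon.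
From Coquelicot Require Import Coquelicot.
Open Scope R_scope.

Definition ellipF (k phi : R) : R :=
  RInt (fun t => / sqrt (1 - k ^ 2 * (sin t) ^ 2)) 0 phi.

(* Jacobi amplitude: the inverse of phi |-> F(phi,k) (a bijection R -> R for 0<=k<1). *)
Definition jacobi_am (k x : R) : R :=
  epsilon (inhabits 0) (fun phi => ellipF k phi = x).

Definition jacobi_sn (x k : R) : R := sin (jacobi_am k x).

Definition kmod (E : R) : R := sqrt ((1 - E) / (1 + E)).

Definition u0 (E x : R) : R :=
  sqrt (1 - E) * jacobi_sn (x * sqrt ((1 + E) / 2)) (kmod E).

Definition is_period (f : R -> R) (p : R) : Prop := forall x, f (x + p) = f x.

(* T0: u0 has minimal period 2 T0, i.e. T0 = (inf of positive periods)/2. *)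
Definition T0 (E : R) : R :=
  real (Glb_Rbar (fun p => 0 < p /\ is_period (u0 E) p)) / 2.

Definition Lminus_solves (E : R) (v f : R -> R) : Prop :=
  exists v1 v2 : R -> R,
    (forall x, is_derive v x (v1 x)) /\
    (forall x, is_derive v1 x (v2 x)) /\
    (forall x, - v2 x + ((u0 E x) ^ 2 - 1) * v x = f x).

Definition bounded_fun (v : R -> R) : Prop := exists M, forall x, Rabs (v x) <= M.

Definition even_fun (v : R -> R) : Prop := forall x, v (- x) = v x.

(* Main.v *)
Require Import Defs.
From Stdlib Require Import Reals Lra Psatz Classical ClassicalEpsilon.
From Coquelicot Require Import Coquelicot.
Open Scope R_scope.

Lemma D_eq (f : R -> R) (x a b : R) : is_derive f x a -> a = b -> is_derive f x b.
Proof. intros H ->; exact H. Qed.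
Lemma D_plus (f g : R -> R) (x a b : R) : is_derive f x a -> is_derive g x b ->
  is_derive (fun t => f t + g t) x (a + b).
Proof. intros; apply (is_derive_plus f g); auto. Qed.
Lemma D_minus (f g : R -> R) (x a b : R) : is_derive f x a -> is_derive g x b ->
  is_derive (fun t => f t - g t) x (a - b).
Proof. intros; apply (is_derive_minus f g); auto. Qed.
Lemma D_mult (f g : R -> R) (x a b : R) : is_derive f x a -> is_derive g x b ->
  is_derive (fun t => f t * g t) x (a * g x + f x * b).
Proof. intros; apply (is_derive_mult f g); auto. intros; apply Rmult_comm. Qed.
Lemma D_opp (f : R -> R) (x a : R) : is_derive f x a -> is_derive (fun t => - f t) x (- a).
Proof. intros; apply (is_derive_opp f); auto. Qed.
Lemma D_ext (f g : R -> R) (x l : R) : (forall t, f t = g t) -> is_derive f x l -> is_derive g x l.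
Proof. intros; apply (is_derive_ext f g); auto. Qed.
Lemma D_const (c x : R) : is_derive (fun _ => c) x 0.
Proof. apply (is_derive_const c x). Qed.
Lemma D_id (x : R) : is_derive (fun t => t) x 1.
Proof. apply (is_derive_id x). Qed.
Lemma D_pow2 (f : R -> R) (x a : R) : is_derive f x a -> is_derive (fun t => f t ^ 2) x (2 * a * f x).
Proof. intros H. eapply D_eq. apply (D_ext (fun t => f t * f t)).
  intros; (cbv beta; ring). apply D_mult; eauto. (cbv beta; ring). Qed.
Lemma D_pow3 (f : R -> R) (x a : R) : is_derive f x a -> is_derive (fun t => f t ^ 3) x (3 * a * f x ^ 2).
Proof. intros H. eapply D_eq. apply (D_ext (fun t => f t * (f t * f t))).
  intros; (cbv beta; ring). apply D_mult. exact H. apply D_mult; exact H. cbv beta; (cbv beta; ring). Qed.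
Lemma D_shift (f : R -> R) (x c a : R) : is_derive f (x + c) a -> is_derive (fun t => f (t + c)) x a.
Proof. intros H. apply (D_eq _ _ (scal 1 a)). apply (is_derive_comp f (fun t => t + c)). exact H.
  apply (D_eq _ _ (1 + 0)). apply D_plus. apply D_id. apply D_const. (cbv beta; ring). unfold scal; simpl.
  unfold mult; simpl. (cbv beta; ring). Qed.
Lemma D_neg (f : R -> R) (x a : R) : is_derive f (- x) a -> is_derive (fun t => f (- t)) x (- a).
Proof. intros H. apply (D_eq _ _ (scal (-1) a)). apply (is_derive_comp f (fun t => - t)). exact H.
  apply D_opp, D_id. unfold scal; simpl; unfold mult; simpl. (cbv beta; ring). Qed.

Ltac dtac := repeat first
  [ apply D_plus | apply D_minus | apply D_mult | apply D_opp | apply D_pow2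
  | apply D_pow3 | apply D_id | apply D_const ].

Lemma mono_deriv (f f' : R -> R) : (forall x, is_derive f x (f' x)) -> (forall x, 0 <= f' x) ->
  forall a b, a <= b -> f a <= f b.
Proof.
  intros Hd Hp a b Hab. destruct (Req_dec a b) as [->|Hne]. lra.
  destruct (MVT_cor2 f f' a b) as [c [Hc _]]. lra.
  intros c _; apply is_derive_Reals, Hd.
  assert (0 <= f' c * (b - a)) by (apply Rmult_le_pos; auto; lra). lra.
Qed.

Lemma const_deriv (f : R -> R) : (forall x, is_derive f x 0) -> forall a b, f a = f b.
Proof.
  intros Hd a b.
  assert (forall a b, a <= b -> f a <= f b).
  { apply (mono_deriv f (fun _ => 0)); auto; intros; lra. }
  assert (forall a b, a <= b -> f b <= f a).
  { intros a0 b0 H1. pose proof (mono_deriv (fun t => - f t) (fun _ => - 0)) as M.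
    assert (- f a0 <= - f b0). apply M; auto. intros; apply D_opp; auto. intros; lra. lra. }
  destruct (Rle_dec a b); [ specialize (H a b); specialize (H0 a b) |
   specialize (H b a); specialize (H0 b a)]; lra.
Qed.

Lemma deriv_pos_right (f : R -> R) (x l : R) : is_derive f x l -> 0 < l -> forall d, 0 < d ->
  exists h, 0 < h < d /\ f x < f (x + h).
Proof.
  intros Hd Hl d Hdp. apply is_derive_Reals in Hd.
  destruct (Hd l Hl) as [del Hdel].
  set (h := Rmin d del / 2).
  assert (Hm1 : Rmin d del <= d) by apply Rmin_l.
  assert (Hm2 : Rmin d del <= del) by apply Rmin_r.
  assert (Hm0 : 0 < Rmin d del) by (apply Rmin_pos; [lra | apply cond_pos]).
  exists h. unfold h. split. lra.
  assert (Hh : Rabs ((f (x + h) - f x) / h - l) < l).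
  { apply Hdel. unfold h; lra. rewrite Rabs_right; unfold h; lra. }
  apply Rabs_def2 in Hh. destruct Hh as [_ Hh].
  assert (0 < (f (x + h) - f x) / h) by lra.
  assert (0 < h) by (unfold h; lra).
  assert (0 < (f (x + h) - f x) / h * h) by (apply Rmult_lt_0_compat; lra).
  unfold h in *. field_simplify in H1; lra.
Qed.

Lemma D_RInt (f : R -> R) : (forall x, continuous f x) -> forall x,
  is_derive (fun y => RInt f 0 y) x (f x).
Proof.
  intros Hc x. apply (is_derive_RInt f (fun y => RInt f 0 y) 0 x).
  apply filter_forall. intros y. apply (RInt_correct f).
  apply ex_RInt_continuous. intros; apply Hc. apply Hc.
Qed.

Lemma deriv_unique (f : R -> R) (x a b : R) : is_derive f x a -> is_derive f x b -> a = b.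
Proof. intros H1 H2. apply is_derive_unique in H1. apply is_derive_unique in H2. congruence. Qed.

Definition Ls (u v f : R -> R) : Prop :=
  exists v1 v2 : R -> R,
    (forall x, is_derive v x (v1 x)) /\
    (forall x, is_derive v1 x (v2 x)) /\
    (forall x, - v2 x + ((u x) ^ 2 - 1) * v x = f x).

Module G.
Section Gen.
Variables (u u1 : R -> R) (P x0 : R).
Hypothesis Hd : forall x, is_derive u x (u1 x).
Hypothesis Hd1 : forall x, is_derive u1 x (- u x + u x ^ 3).
Hypothesis Hb : forall x, u x ^ 2 <= 1.
Hypothesis Hodd : forall x, u (- x) = - u x.
Hypothesis HP : 0 < P.
Hypothesis Hper : forall x, u (x + P) = u x.
Hypothesis Hx0 : u x0 <> 0.

Lemma uniq0 (z z1 z2 : R -> R) : (forall x, is_derive z x (z1 x)) -> (forall x, is_derive z1 x (z2 x)) ->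
  (forall x, - z2 x + (u x ^ 2 - 1) * z x = 0) -> z 0 = 0 -> z1 0 = 0 -> forall x, z x = 0.
Proof.
  intros Hz Hz1 Heq H0 H1.
  set (e := fun x => z x ^ 2 + z1 x ^ 2).
  set (e' := fun x => 2 * z x * z1 x * u x ^ 2).
  assert (De : forall x, is_derive e x (e' x)).
  { intros x. unfold e, e'. eapply D_eq. apply D_plus; apply D_pow2; auto.
    specialize (Heq x). assert (z2 x = (u x ^ 2 - 1) * z x) by lra. rewrite H. (cbv beta; ring). }
  assert (Ble : forall x, e' x <= e x /\ - e x <= e' x).
  { intros x; unfold e, e'. specialize (Hb x). assert (0 <= u x ^ 2) by nra.
    set (t := u x ^ 2) in *. set (a := z x). set (b := z1 x).
    assert (Hab1 : 0 <= (a - b) ^ 2) by apply pow2_ge_0.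
    assert (Hab2 : 0 <= (a + b) ^ 2) by apply pow2_ge_0.
    destruct (Rle_dec 0 (a * b)).
    - assert (0 <= a * b * (1 - t)) by (apply Rmult_le_pos; lra).
      assert (0 <= a * b * t) by (apply Rmult_le_pos; lra). split; nra.
    - assert (0 <= - (a * b) * (1 - t)) by (apply Rmult_le_pos; lra).
      assert (0 <= - (a * b) * t) by (apply Rmult_le_pos; lra). split; nra. }
  assert (e0 : e 0 = 0) by (unfold e; rewrite H0, H1; ring).
  assert (epos : forall x, 0 <= e x) by (intros; unfold e; nra).
  intros x.
  assert (e x = 0).
  { destruct (Rle_dec 0 x).
    - pose proof (mono_deriv (fun t => - (e t * exp (- t))) (fun t => - ((e' t - e t) * exp (- t)))) as M.
      assert (- (e 0 * exp (- 0)) <= - (e x * exp (- x))).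
      { apply M; auto.
        + intros t. eapply D_eq. apply D_opp. apply D_mult. apply De.
          apply (D_neg exp). apply is_derive_exp. (cbv beta; ring).
        + intros t. destruct (Ble t). pose proof (exp_pos (- t)). nra. }
      rewrite e0 in H. pose proof (exp_pos (- x)). pose proof (epos x). nra.
    - pose proof (mono_deriv (fun t => (e t * exp t)) (fun t => ((e' t + e t) * exp t))) as M.
      assert ((e x * exp x) <= (e 0 * exp 0)).
      { apply M; try lra.
        + intros t. eapply D_eq. apply D_mult. apply De.
          apply is_derive_exp. (cbv beta; ring).
        + intros t. destruct (Ble t). pose proof (exp_pos t). nra. }
      rewrite e0 in H. pose proof (exp_pos x). pose proof (epos x). nra. }
  unfold e in H. nra.
Qed.

Lemma u_0 : u 0 = 0.
Proof. pose proof (Hodd 0). rewrite Ropp_0 in H. lra. Qed.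

Lemma d_nz : u1 0 <> 0.
Proof.
  intros Hz. apply Hx0. apply (uniq0 u u1 (fun x => - u x + u x ^ 3)); auto.
  intros; (cbv beta; ring). apply u_0.
Qed.

Lemma cont_u2 : forall x, continuous (fun t => u t ^ 2) x.
Proof. intros x. apply (ex_derive_continuous (K := R_AbsRing) (fun t => u t ^ 2)). eexists. apply D_pow2, Hd. Qed.

Definition H x := RInt (fun t => u t ^ 2) 0 x.
Lemma DH x : is_derive H x (u x ^ 2).
Proof. apply (D_RInt (fun t => u t ^ 2)). apply cont_u2. Qed.
Lemma H0 : H 0 = 0.
Proof. unfold H. rewrite RInt_point. reflexivity. Qed.

Definition beta := H P.
Lemma H_per x : H (x + P) = H x + beta.
Proof.
  assert (forall a b, (fun y => H (y + P) - H y) a = (fun y => H (y + P) - H y) b).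
  { apply const_deriv. intros y. eapply D_eq. apply D_minus. apply D_shift, DH. apply DH.
    rewrite Hper. (cbv beta; ring). }
  specialize (H1 x 0). simpl in H1. rewrite Rplus_0_l, H0 in H1. unfold beta. lra.
Qed.

Lemma H_mono a b : a <= b -> H a <= H b.
Proof. apply (mono_deriv H (fun t => u t ^ 2)). apply DH. intros; apply pow2_ge_0. Qed.

Lemma beta_pos : 0 < beta.
Proof.
  assert (Hb0 : 0 <= beta). { pose proof (H_per 0) as Hq. rewrite Rplus_0_l, H0 in Hq.
    pose proof (H_mono 0 P (Rlt_le _ _ HP)) as Hm. rewrite H0 in Hm. lra. }
  destruct (Rle_lt_or_eq_dec _ _ Hb0) as [|Hz]; auto. exfalso.
  destruct (deriv_pos_right H x0 (u x0 ^ 2) (DH x0)) with (d := P) as [h [Hh Hlt]].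
  assert (u x0 ^ 2 <> 0) by (apply pow_nonzero; auto).
  pose proof (pow2_ge_0 (u x0)). lra. lra.
  pose proof (H_mono (x0 + h) (x0 + P) ltac:(lra)). pose proof (H_per x0). lra.
Qed.

Lemma u1_per x : u1 (x + P) = u1 x.
Proof.
  apply (deriv_unique u x). apply (D_ext (fun t => u (t + P))).
  intros; apply Hper. apply D_shift, Hd. apply Hd.
Qed.

Lemma u1_even x : u1 (- x) = u1 x.
Proof.
  assert (- u1 (- x) = - u1 x).
  { apply (deriv_unique (fun t => u (- t)) x). apply D_neg, Hd.
    apply (D_ext (fun t => - u t)). intros; rewrite Hodd; (cbv beta; ring). apply D_opp, Hd. }
  lra.
Qed.

Lemma H_odd x : H (- x) = - H x.
Proof.
  assert (forall a b, (fun y => H (- y) + H y) a = (fun y => H (- y) + H y) b).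
  { apply const_deriv. intros y. eapply D_eq. apply D_plus. apply D_neg, DH. apply DH.
    rewrite Hodd. (cbv beta; ring). }
  specialize (H1 x 0). simpl in H1. rewrite Ropp_0, H0 in H1. lra.
Qed.

Definition w x := u x * H x - 2 * u1 x.
Definition w1 x := u1 x * H x + u x * u x ^ 2 - 2 * (- u x + u x ^ 3).
Definition w2 x := (- u x + u x ^ 3) * H x + u1 x * u x ^ 2 + (u1 x * u x ^ 2 + u x * (2 * u1 x * u x))
   - 2 * (- u1 x + 3 * u1 x * u x ^ 2).
Lemma Dw x : is_derive w x (w1 x).
Proof. unfold w, w1. eapply D_eq. apply D_minus. apply D_mult. apply Hd. apply DH.
  apply (is_derive_scal u1 x 2). apply Hd1. (cbv beta; ring). Qed.
Lemma Dw1 x : is_derive w1 x (w2 x).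
Proof. unfold w1, w2. eapply D_eq. apply D_minus. apply D_plus. apply D_mult. apply Hd1. apply DH.
  apply D_mult. apply Hd. apply D_pow2, Hd.
  apply (is_derive_scal (fun t => - u t + u t ^ 3) x 2). apply D_plus. apply D_opp, Hd.
  apply D_pow3, Hd. (cbv beta; ring). Qed.
Lemma Lw x : - w2 x + (u x ^ 2 - 1) * w x = 0.
Proof. unfold w, w2. (cbv beta; ring). Qed.

Lemma w_per x : w (x + P) = w x + beta * u x.
Proof. unfold w. rewrite Hper, u1_per, H_per. (cbv beta; ring). Qed.

Lemma w_pern (n : nat) x : w (x + INR n * P) = w x + INR n * beta * u x.
Proof.
  induction n. simpl. rewrite Rmult_0_l, Rplus_0_r. (cbv beta; ring).
  rewrite S_INR. replace (x + (INR n + 1) * P) with ((x + INR n * P) + P) by (cbv beta; ring).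
  rewrite w_per, IHn.
  assert (forall m : nat, u (x + INR m * P) = u x).
  { induction m. simpl; f_equal; (cbv beta; ring). rewrite S_INR.
    replace (x + (INR m + 1) * P) with ((x + INR m * P) + P) by (cbv beta; ring). rewrite Hper; auto. }
  rewrite H1. (cbv beta; ring).
Qed.

Lemma basis (v v1 v2 : R -> R) : (forall x, is_derive v x (v1 x)) -> (forall x, is_derive v1 x (v2 x)) ->
  (forall x, - v2 x + (u x ^ 2 - 1) * v x = 0) ->
  forall x, v x = (v1 0 / u1 0) * u x + (- v 0 / (2 * u1 0)) * w x.
Proof.
  intros Hv Hv1 Hl.
  set (c1 := v1 0 / u1 0). set (c2 := - v 0 / (2 * u1 0)).
  pose proof d_nz as Hdn.
  assert (forall x, (fun t => v t - (c1 * u t + c2 * w t)) x = 0).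
  { apply (uniq0 _ (fun t => v1 t - (c1 * u1 t + c2 * w1 t))
                   (fun t => v2 t - (c1 * (- u t + u t ^ 3) + c2 * w2 t))).
    - intros x. apply D_minus; auto. apply D_plus; apply is_derive_scal; auto. apply Dw.
    - intros x. apply D_minus; auto. apply D_plus; apply is_derive_scal; auto. apply Dw1.
    - intros x. pose proof (Lw x) as L1. pose proof (Hl x) as L2.
      transitivity (- v2 x + (u x ^ 2 - 1) * v x - c2 * (- w2 x + (u x ^ 2 - 1) * w x)).
      (cbv beta; ring). rewrite L1, L2. ring.
    - simpl. unfold w. rewrite u_0, H0. unfold c1, c2. field. auto.
    - simpl. unfold w1. rewrite u_0, H0. unfold c1, c2. field. auto. }
  intros x. specialize (H1 x). simpl in H1. fold c1 c2. lra.
Qed.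


Lemma u_pern (n : nat) x : u (x + INR n * P) = u x.
Proof. induction n. simpl; f_equal; ring. rewrite S_INR.
  replace (x + (INR n + 1) * P) with ((x + INR n * P) + P) by ring. rewrite Hper; auto. Qed.

Lemma part1 v : bounded_fun v -> Ls u v (fun _ => 0) -> exists C, forall x, v x = C * u x.
Proof.
  intros [M HM] [v1 [v2 [Dv [Dv1 Lv]]]].
  pose proof (basis v v1 v2 Dv Dv1 Lv) as Hbs.
  set (c1 := v1 0 / u1 0) in *. set (c2 := - v 0 / (2 * u1 0)) in *.
  exists c1. intros x. rewrite Hbs.
  destruct (Req_dec c2 0) as [Hc|Hc]. rewrite Hc; ring. exfalso.
  set (K := c2 * beta * u x0).
  assert (HK : K <> 0). { unfold K. apply Rmult_integral_contrapositive; split; auto.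
    apply Rmult_integral_contrapositive; split; auto. pose proof beta_pos; lra. }
  set (A := M + Rabs (c1 * u x0 + c2 * w x0)).
  destruct (INR_archimed (Rabs K) A) as [n Hn]. apply Rabs_pos_lt; auto.
  specialize (HM (x0 + INR n * P)). rewrite Hbs, u_pern, w_pern in HM.
  replace (c1 * u x0 + c2 * (w x0 + INR n * beta * u x0)) with
    ((c1 * u x0 + c2 * w x0) + INR n * K) in HM by (unfold K; ring).
  assert (Rabs (INR n * K) <= M + Rabs (c1 * u x0 + c2 * w x0)).
  { pose proof (Rabs_triang_inv (INR n * K) (- (c1 * u x0 + c2 * w x0))) as T.
    rewrite Rabs_Ropp in T.
    replace (INR n * K - - (c1 * u x0 + c2 * w x0)) with ((c1 * u x0 + c2 * w x0) + INR n * K) in T by ring.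
    lra. }
  rewrite Rabs_mult, Rabs_right in H1 by apply Rle_ge, pos_INR. fold A in H1. lra.
Qed.

Definition cc := P / (2 * beta).
Definition V x := (- / 2) * (x * u x) + cc * w x.
Definition V1 x := (- / 2) * (1 * u x + x * u1 x) + cc * w1 x.
Definition V2 x := (- / 2) * (0 * u x + 1 * u1 x + (1 * u1 x + x * (- u x + u x ^ 3))) + cc * w2 x.
Lemma DV x : is_derive V x (V1 x).
Proof. unfold V, V1. apply D_plus; apply is_derive_scal. apply D_mult. apply D_id. apply Hd. apply Dw. Qed.
Lemma DV1 x : is_derive V1 x (V2 x).
Proof. unfold V1, V2. apply D_plus; apply is_derive_scal.
  apply D_plus. apply D_mult. apply D_const. apply Hd. apply D_mult. apply D_id. apply Hd1. apply Dw1. Qed.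
Lemma LV x : - V2 x + (u x ^ 2 - 1) * V x = u1 x.
Proof. unfold V, V2, w, w2. field. Qed.
Lemma V_per x : V (x + P) = V x.
Proof. unfold V. rewrite w_per, Hper. unfold cc. pose proof beta_pos. field. lra. Qed.
Lemma V_even x : V (- x) = V x.
Proof. unfold V, w. rewrite Hodd, H_odd, u1_even. ring. Qed.

Lemma part2_uniq (W W1 W2 : R -> R) : (forall x, is_derive W x (W1 x)) -> (forall x, is_derive W1 x (W2 x)) ->
  (forall x, - W2 x + (u x ^ 2 - 1) * W x = u1 x) -> (forall x, W (- x) = W x) ->
  (forall x, W (x + P) = W x) -> forall x, W x = V x.
Proof.
  intros DW DW1 LW We Wp.
  set (z := fun x => W x - V x). set (z1 := fun x => W1 x - V1 x). set (z2 := fun x => W2 x - V2 x).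
  assert (Dz : forall x, is_derive z x (z1 x)) by (intros; apply D_minus; auto; apply DV).
  assert (Dz1 : forall x, is_derive z1 x (z2 x)) by (intros; apply D_minus; auto; apply DV1).
  assert (Lz : forall x, - z2 x + (u x ^ 2 - 1) * z x = 0).
  { intros x. unfold z, z2. pose proof (LW x). pose proof (LV x). lra. }
  pose proof (basis z z1 z2 Dz Dz1 Lz) as Hbs.
  assert (Hz10 : z1 0 = 0).
  { assert (- z1 (- 0) = z1 0).
    { apply (deriv_unique (fun t => z (- t)) 0). apply D_neg, Dz.
      apply (D_ext z). intros t; unfold z; rewrite We, V_even; auto. apply Dz. }
    rewrite Ropp_0 in H1. lra. }
  rewrite Hz10 in Hbs. set (c2 := - z 0 / (2 * u1 0)) in *.
  assert (Hc : c2 = 0).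
  { assert (z (x0 + P) = z x0) by (unfold z; rewrite Wp, V_per; auto).
    rewrite !Hbs, Hper, w_per in H1.
    assert (c2 * (beta * u x0) = 0) by lra.
    apply Rmult_integral in H2. destruct H2; auto. exfalso.
    apply Rmult_integral in H2. destruct H2. pose proof beta_pos; lra. auto. }
  intros x. specialize (Hbs x). rewrite Hc in Hbs. unfold z in Hbs.
  assert (W x - V x = 0). rewrite Hbs. unfold Rdiv; ring. lra.
Qed.

End Gen.
End G.

Section Ell.
Variable E : R.
Hypothesis hE : 0 < E < 1.

Lemma k2 : kmod E ^ 2 = (1 - E) / (1 + E).
Proof. unfold kmod; apply pow2_sqrt. apply Rlt_le, Rdiv_lt_0_compat; lra. Qed.
Lemma k2lt : kmod E ^ 2 < 1.
Proof. rewrite k2. apply (Rmult_lt_reg_r (1 + E)). lra. unfold Rdiv. rewrite Rmult_assoc, Rinv_l; lra. Qed.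
Lemma k2pos : 0 <= kmod E ^ 2.
Proof. apply pow2_ge_0. Qed.

Definition q t := 1 - kmod E ^ 2 * sin t ^ 2.
Lemma q_pos t : 0 < q t.
Proof. unfold q. pose proof (SIN_bound t). pose proof k2lt. pose proof k2pos.
  assert (sin t ^ 2 <= 1) by nra. nra. Qed.
Lemma q_le1 t : q t <= 1.
Proof. unfold q. pose proof k2pos. pose proof (pow2_ge_0 (sin t)). nra. Qed.

Definition g t := / sqrt (q t).
Lemma g_cont x : continuous g x.
Proof. apply (ex_derive_continuous (K := R_AbsRing) g). unfold g, q.
  pose proof (q_pos x) as Hq. unfold q in Hq. auto_derive. repeat split.
  lra. apply Rgt_not_eq, sqrt_lt_R0. lra. Qed.

Definition F phi := ellipF (kmod E) phi.
Lemma DF x : is_derive F x (g x).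
Proof. unfold F, ellipF. apply (D_RInt g g_cont). Qed.

Lemma g_ge1 t : 1 <= g t.
Proof. unfold g. pose proof (q_pos t). pose proof (q_le1 t).
  rewrite <- Rinv_1. apply Rinv_le_contravar. apply sqrt_lt_R0; auto.
  rewrite <- sqrt_1. apply sqrt_le_1_alt; auto. Qed.

Lemma F_grow a b : a <= b -> b - a <= F b - F a.
Proof. intros Hab. pose proof (mono_deriv (fun t => F t - t) (fun t => g t - 1)) as M.
  assert (F a - a <= F b - b). apply M; auto. intros; apply D_minus. apply DF. apply D_id.
  intros; pose proof (g_ge1 x); lra. lra. Qed.

Lemma F0 : F 0 = 0.
Proof. unfold F, ellipF. rewrite RInt_point. reflexivity. Qed.

Lemma F_inj a b : F a = F b -> a = b.
Proof. intros Hf. destruct (Rle_dec a b). pose proof (F_grow a b r); lra.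
  pose proof (F_grow b a ltac:(lra)); lra. Qed.

Lemma F_cont x : continuous F x.
Proof. apply (ex_derive_continuous (K := R_AbsRing) F). eexists; apply DF. Qed.

Lemma F_surj y : exists phi, F phi = y.
Proof.
  set (b := Rabs y). assert (0 <= b) by apply Rabs_pos.
  pose proof (F_grow 0 b H) as H1. pose proof (F_grow (- b) 0 ltac:(lra)) as H2. rewrite F0 in *.
  assert (- b <= y <= b) by (unfold b; apply Rabs_le_between, Rle_refl).
  destruct (IVT_gen_consistent F (- b) b y F_cont) as [x [_ Hx]].
  rewrite Rmin_left, Rmax_right; lra. eauto.
Qed.

Definition am x := jacobi_am (kmod E) x.
Lemma am_spec x : F (am x) = x.
Proof. unfold am, jacobi_am, F. apply epsilon_spec.
  apply F_surj. Qed.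
Lemma am_F phi : am (F phi) = phi.
Proof. apply F_inj. apply am_spec. Qed.
Lemma am_mono x y : x <= y -> am x <= am y.
Proof. intros Hxy. destruct (Rle_dec (am x) (am y)); auto.
  pose proof (F_grow (am y) (am x) ltac:(lra)). rewrite !am_spec in H. lra. Qed.
Lemma am_lip x y : Rabs (am x - am y) <= Rabs (x - y).
Proof. destruct (Rle_dec x y).
  - pose proof (am_mono x y r). pose proof (F_grow _ _ H). rewrite !am_spec in H0.
    rewrite !Rabs_left1; lra.
  - pose proof (am_mono y x ltac:(lra)). pose proof (F_grow _ _ H). rewrite !am_spec in H0.
    rewrite !Rabs_right; lra. Qed.

Definition Dn t := sqrt (q t).
Lemma Dn_pos t : 0 < Dn t.
Proof. apply sqrt_lt_R0, q_pos. Qed.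

Lemma Dam x : is_derive am x (Dn (am x)).
Proof.
  apply is_derive_Reals.
  assert (Prf : forall a, am (x - 1) <= a <= am (x + 1) -> derivable_pt F a).
  { intros a _. exists (g a). apply is_derive_Reals, DF. }
  assert (Hincr : am (x - 1) <= am x <= am (x + 1)) by (split; apply am_mono; lra).
  assert (Hc : continuity_pt am x).
  { intros eps Heps. exists eps. split; auto. intros y [_ Hy]. simpl in *. unfold R_dist in *.
    pose proof (am_lip y x). lra. }
  pose proof (Ranalysis5.derivable_pt_lim_recip_interv F am (x - 1) (x + 1) x Prf Hc
    ltac:(lra) ltac:(lra) Hincr) as Hr.
  assert (Hd : forall a Ha, derive_pt F a (Prf a Ha) = g a).
  { intros a Ha. apply derive_pt_eq_0. apply is_derive_Reals, DF. }
  rewrite Hd in Hr.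
  replace (Dn (am x)) with (1 / g (am x)).
  apply Hr. intros y _. unfold comp, id. apply am_spec.
  pose proof (g_ge1 (am x)); lra.
  unfold g, Dn. pose proof (Dn_pos (am x)). unfold Dn in H. field. lra.
Qed.


Lemma D_comp (f h : R -> R) (x a b : R) : is_derive f (h x) a -> is_derive h x b ->
  is_derive (fun t => f (h t)) x (b * a).
Proof. intros H1 H2. apply (D_eq _ _ (scal b a)). apply (is_derive_comp f h); auto.
  reflexivity. Qed.

Definition sE := sqrt ((1 + E) / 2).
Definition aE := sqrt (1 - E).
Lemma sE2 : sE ^ 2 = (1 + E) / 2.
Proof. unfold sE; apply pow2_sqrt; lra. Qed.
Lemma aE2 : aE ^ 2 = 1 - E.
Proof. unfold aE; apply pow2_sqrt; lra. Qed.
Lemma sE_pos : 0 < sE.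
Proof. unfold sE; apply sqrt_lt_R0; lra. Qed.
Lemma aE_pos : 0 < aE.
Proof. unfold aE; apply sqrt_lt_R0; lra. Qed.

Definition phi x := am (x * sE).
Lemma u0_eq x : u0 E x = aE * sin (phi x).
Proof. reflexivity. Qed.

Lemma Dphi x : is_derive phi x (sE * Dn (phi x)).
Proof. unfold phi. apply (D_eq _ _ ((1 * sE + x * 0) * Dn (am (x * sE)))).
  apply (D_comp am (fun t => t * sE)). apply Dam. apply D_mult. apply D_id. apply D_const. ring. Qed.

Lemma DDn y : is_derive Dn y (- kmod E ^ 2 * sin y * cos y / Dn y).
Proof. pose proof (q_pos y) as Hq. pose proof (Dn_pos y) as Hd. unfold Dn, q in *.
  auto_derive. lra. replace (1 + - (kmod E * (kmod E * 1) * (sin y * (sin y * 1)))) with (1 - kmod E ^ 2 * sin y ^ 2) by ring. field. lra. Qed.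

Definition u1 x := aE * (cos (phi x) * (sE * Dn (phi x))).

Lemma Du0 x : is_derive (u0 E) x (u1 x).
Proof. apply (D_ext (fun t => aE * sin (phi t))). intros; symmetry; apply u0_eq.
  unfold u1. apply (D_eq _ _ (aE * ((sE * Dn (phi x)) * cos (phi x)))).
  apply is_derive_scal. apply (D_comp sin phi). apply is_derive_sin. apply Dphi. ring. Qed.

Lemma Du1 x : is_derive u1 x (- u0 E x + u0 E x ^ 3).
Proof.
  unfold u1. eapply D_eq. apply is_derive_scal. apply D_mult.
  apply (D_comp cos phi). apply is_derive_cos. apply Dphi.
  apply is_derive_scal. apply (D_comp Dn phi). apply DDn. apply Dphi.
  rewrite u0_eq. cbv beta.
  set (S := sin (phi x)). set (C := cos (phi x)). set (Dv := Dn (phi x)).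
  assert (HDv : Dv ^ 2 = 1 - kmod E ^ 2 * S ^ 2). { unfold Dv, Dn. rewrite pow2_sqrt. reflexivity.
     apply Rlt_le, q_pos. }
  assert (HC : C ^ 2 = 1 - S ^ 2). { unfold C, S. pose proof (sin2_cos2 (phi x)). unfold Rsqr in H. lra. }
  assert (Dv <> 0) by (apply Rgt_not_eq, Dn_pos).
  transitivity (aE * sE ^ 2 * S * (- Dv ^ 2 - kmod E ^ 2 * C ^ 2)).
  field. auto.
  rewrite HDv, HC, sE2, k2.
  replace ((aE * S) ^ 3) with (aE * aE ^ 2 * S ^ 3) by ring. rewrite aE2. field. lra.
Qed.

Lemma u0_bound x : u0 E x ^ 2 <= 1.
Proof. rewrite u0_eq. pose proof (SIN_bound (phi x)). pose proof aE2.
  replace ((aE * sin (phi x)) ^ 2) with (aE ^ 2 * sin (phi x) ^ 2) by ring.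
  assert (sin (phi x) ^ 2 <= 1) by nra. rewrite H0. nra. Qed.

Lemma g_even y : g (- y) = g y.
Proof. unfold g, q. rewrite sin_neg. f_equal. f_equal. ring. Qed.

Lemma F_odd y : F (- y) = - F y.
Proof.
  assert (forall a b, (fun y => F (- y) + F y) a = (fun y => F (- y) + F y) b).
  { apply const_deriv. intros t. eapply D_eq. apply D_plus. apply D_neg, DF. apply DF.
    rewrite g_even. ring. }
  specialize (H y 0). simpl in H. rewrite Ropp_0, F0 in H. lra.
Qed.

Lemma am_odd x : am (- x) = - am x.
Proof. apply F_inj. rewrite F_odd, !am_spec. reflexivity. Qed.

Lemma u0_odd x : u0 E (- x) = - u0 E x.
Proof. rewrite !u0_eq. unfold phi. replace (- x * sE) with (- (x * sE)) by ring.
  rewrite am_odd, sin_neg. ring. Qed.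

Lemma g_shift y : g (y + PI) = g y.
Proof. unfold g, q. rewrite neg_sin. f_equal. f_equal. ring. Qed.

Definition Kp := F PI.
Lemma F_shift y : F (y + PI) = F y + Kp.
Proof.
  assert (forall a b, (fun y => F (y + PI) - F y) a = (fun y => F (y + PI) - F y) b).
  { apply const_deriv. intros t. eapply D_eq. apply D_minus. apply D_shift, DF. apply DF.
    rewrite g_shift. ring. }
  specialize (H y 0). simpl in H. rewrite Rplus_0_l, F0 in H. unfold Kp. lra.
Qed.

Lemma am_shift y : am (y + Kp) = am y + PI.
Proof. apply F_inj. rewrite F_shift, !am_spec. reflexivity. Qed.

Lemma Kp_pos : PI <= Kp.
Proof. pose proof (F_grow 0 PI (Rlt_le _ _ PI_RGT_0)). rewrite F0 in H. unfold Kp; lra. Qed.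

Definition P0 := 2 * Kp / sE.
Lemma P0_per x : u0 E (x + P0) = u0 E x.
Proof. rewrite !u0_eq. unfold phi, P0. pose proof sE_pos.
  replace ((x + 2 * Kp / sE) * sE) with ((x * sE + Kp) + Kp) by (field; lra).
  rewrite !am_shift, !neg_sin. ring. Qed.

Lemma am0 : am 0 = 0.
Proof. rewrite <- F0 at 1. apply am_F. Qed.

Lemma per_lb p : 0 < p -> is_period (u0 E) p -> Kp / sE <= p.
Proof.
  intros Hp Hper. pose proof sE_pos. pose proof aE_pos.
  assert (u0 E p = 0). { pose proof (Hper 0). rewrite Rplus_0_l in H1. rewrite H1, u0_eq.
    unfold phi. rewrite Rmult_0_l, am0, sin_0. ring. }
  rewrite u0_eq in H1. assert (sin (phi p) = 0).
  { apply Rmult_integral in H1. destruct H1; auto. lra. }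
  apply sin_eq_0_0 in H2. destruct H2 as [z Hz].
  assert (Hpos : 0 < phi p).
  { pose proof (am_mono 0 (p * sE) ltac:(nra)). rewrite am0 in H2. unfold phi.
    destruct (Rle_lt_or_eq_dec _ _ H2); auto. exfalso.
    pose proof (am_spec (p * sE)). rewrite <- e, F0 in H3. nra. }
  assert (Hz0 : 0 < IZR z). { rewrite Hz in Hpos. pose proof PI_RGT_0. nra. }
  apply lt_0_IZR in Hz0. assert (Hz1 : 1 <= IZR z) by (apply IZR_le; lia).
  assert (Hph : PI <= phi p) by (rewrite Hz; pose proof PI_RGT_0; nra).
  pose proof (F_grow _ _ Hph) as Hg. unfold phi in Hg, Hph. rewrite am_spec in Hg. fold Kp in Hg.
  apply (Rmult_le_reg_r sE); auto. unfold Rdiv. rewrite Rmult_assoc, Rinv_l; lra.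
Qed.

Lemma per_diff p1 p2 : is_period (u0 E) p1 -> is_period (u0 E) p2 -> is_period (u0 E) (p1 - p2).
Proof. intros H1 H2 x. rewrite <- (H2 (x + (p1 - p2))).
  replace (x + (p1 - p2) + p2) with (x + p1) by ring. rewrite <- (H1 x). reflexivity.
Qed.

Lemma T0_per : 0 < 2 * T0 E /\ is_period (u0 E) (2 * T0 E).
Proof.
  set (S := fun p => 0 < p /\ is_period (u0 E) p).
  pose proof (Glb_Rbar_correct S) as [Hlb Hgr].
  assert (HP0 : S P0). { split. unfold P0. pose proof sE_pos. pose proof Kp_pos. pose proof PI_RGT_0.
    apply Rdiv_lt_0_compat; lra. intros x; apply P0_per. }
  pose proof sE_pos. pose proof Kp_pos. pose proof PI_RGT_0.
  assert (Hd : 0 < Kp / sE) by (apply Rdiv_lt_0_compat; lra).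
  assert (Hl1 : Rbar_le (Kp / sE) (Glb_Rbar S)).
  { apply Hgr. intros p [Hp Hpp]. simpl. apply per_lb; auto. }
  pose proof (Hlb P0 HP0) as Hl2.
  unfold T0. fold S.
  destruct (Glb_Rbar S) as [r| |] eqn:Hg; simpl in Hl1, Hl2; try contradiction.
  simpl. replace (2 * (r / 2)) with r by field.
  assert (Hr : S r).
  { apply NNPP. intros Hn.
    assert (Hex : exists p1, S p1 /\ p1 < r + Kp / sE).
    { apply NNPP. intros Hn2. assert (Rbar_le (r + Kp / sE) r).
      { apply Hgr. intros p Sp. simpl. apply Rnot_lt_le. intros Hlt. apply Hn2. eauto. }
      simpl in H2. lra. }
    destruct Hex as [p1 [Sp1 Hp1]].
    assert (Hr1 : r < p1). { pose proof (Hlb p1 Sp1). simpl in H2.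
      destruct (Rle_lt_or_eq_dec _ _ H2); auto. subst; contradiction. }
    assert (Hex : exists p2, S p2 /\ p2 < p1).
    { apply NNPP. intros Hn2. assert (Rbar_le p1 r).
      { apply Hgr. intros p Sp. simpl. apply Rnot_lt_le. intros Hlt. apply Hn2. eauto. }
      simpl in H2. lra. }
    destruct Hex as [p2 [Sp2 Hp2]].
    pose proof (Hlb p2 Sp2). simpl in H2.
    assert (Kp / sE <= p1 - p2). { apply per_lb. lra. apply per_diff. apply Sp1. apply Sp2. }
    lra. }
  exact Hr.
Qed.

Lemma x0_nz : u0 E (F (PI / 2) / sE) <> 0.
Proof. rewrite u0_eq. unfold phi. pose proof sE_pos. pose proof aE_pos.
  replace (F (PI / 2) / sE * sE) with (F (PI / 2)) by (field; lra).
  rewrite am_F, sin_PI2. lra. Qed.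

End Ell.

Theorem lemma5p2 (E : R) (hE : 0 < E < 1) :
  (forall v : R -> R,
     bounded_fun v -> Lminus_solves E v (fun _ => 0) ->
     exists C : R, forall x, v x = C * u0 E x)
  /\
  (exists V : R -> R,
     (even_fun V /\ is_period V (2 * T0 E) /\ Lminus_solves E V (Derive (u0 E)))
     /\ forall W : R -> R,
          even_fun W -> is_period W (2 * T0 E) -> Lminus_solves E W (Derive (u0 E)) ->
          forall x, W x = V x).
Proof.
  assert (Hd : forall x, is_derive (u0 E) x (u1 E x)) by (intros; apply Du0; auto).
  assert (Hd1 : forall x, is_derive (u1 E) x (- u0 E x + u0 E x ^ 3)) by (intros; apply Du1; auto).
  assert (Hb : forall x, u0 E x ^ 2 <= 1) by (intros; apply u0_bound; auto).
  assert (Hodd : forall x, u0 E (- x) = - u0 E x) by (intros; apply u0_odd; auto).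
  destruct (T0_per E hE) as [HP Hper].
  pose proof (x0_nz E hE) as Hx0.
  split.
  - intros v Hv Hs. exact (G.part1 (u0 E) (u1 E) (2 * T0 E) _ Hd Hd1 Hb Hodd HP Hper Hx0 v Hv Hs).
  - exists (G.V (u0 E) (u1 E) (2 * T0 E)). split.
    + split. intros x. apply (G.V_even _ _ _ Hd Hodd).
      split. intros x. apply (G.V_per _ _ _ _ Hd HP Hper Hx0).
      exists (G.V1 (u0 E) (u1 E) (2 * T0 E)), (G.V2 (u0 E) (u1 E) (2 * T0 E)).
      split. intros; apply G.DV; auto. split. intros; apply G.DV1; auto.
      intros x. rewrite G.LV. symmetry. apply is_derive_unique, Hd.
    + intros W We Wp [W1 [W2 [DW [DW1 LW]]]] x.
      apply (G.part2_uniq _ _ _ _ Hd Hd1 Hb Hodd HP Hper Hx0 W W1 W2 DW DW1); auto.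
      intros y. rewrite LW. apply is_derive_unique, Hd.
Qed.
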